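(* For every $d \in \{2,3,4,5,8,11,12,16,24,40\}$, the sequence $\left(\left\lfloor n^{10}/d \right\rfloor\right)_{n \ge 1}$ is eventually prime-free.
   Context: A sequence $(a_n)_{n\ge 1}$ of positive integers is called eventually prime-free if there exists an index $n_0$ such that $a_n$ is composite for all $n \ge n_0$. (Here, as in the paper, this is understood as: only finitely many terms $a_n$ are prime.) *)

(* Defs.v *)
From mathcomp Require Import all_boot.
Set Implicit Arguments. Unset Strict Implicit. Unset Printing Implicit Defensive.

Definition eventually_prime_free (a : nat -> nat) : Prop :=
  exists n0 : nat, forall n : nat, n0 <= n -> ~~ prime (a n).

(* Main.v *)
Require Import Defs.
From mathcomp Require Import all_boot.
From mathcomp Require Import zify.

Lemma key n d s : 0 < d -> n ^ 10 %% d = s ^ 2 -> s + d < n ^ 5 ->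
  ~~ prime (n ^ 10 %/ d).
Proof.
move=> d0 hr hlt; apply/negP => pq.
have q0 := prime_gt0 pq.
set q := n ^ 10 %/ d in pq q0.
set N := n ^ 5 in hlt.
have H : n ^ 10 = q * d + s ^ 2 by rewrite -hr [LHS](divn_eq _ d).
have HN : n ^ 10 = N * N by rewrite /N -expnD.
have E : q * d = (N - s) * (N + s) by nia.
have : q %| (N - s) * (N + s) by rewrite -E dvdn_mulr.
rewrite Euclid_dvdM // => /orP [] /dvdnP [k hk].
- rewrite {}hk in E.
  have : d = k * (N + s).
    apply/eqP; rewrite -(eqn_pmul2l q0); apply/eqP; rewrite E; nia.
  move=> {E H HN pq hr} hd; clearbody N q; subst d; case: k d0 hlt => [|k] d0 hlt; nia.
- rewrite {}hk in E.
  have : d = (N - s) * k.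
    apply/eqP; rewrite -(eqn_pmul2l q0); apply/eqP; rewrite E; nia.
  move=> {E H HN pq hr} hd; clearbody N q; subst d; case: k d0 hlt => [|k] d0 hlt; nia.
Qed.

Definition h d i := let b := i * i %% d in let c := b * b %% d in
  let e := c * i %% d in e * e %% d.

Lemma hE d n : h d (n %% d) = n ^ 10 %% d.
Proof.
rewrite /h.
have hb : n %% d * (n %% d) %% d = n ^ 2 %% d by rewrite modnMm.
rewrite hb.
have hc : n ^ 2 %% d * (n ^ 2 %% d) %% d = n ^ 4 %% d by rewrite modnMm -expnD.
rewrite hc.
have he : n ^ 4 %% d * (n %% d) %% d = n ^ 5 %% d by rewrite modnMm -expnSr.
rewrite he modnMm -expnD.
done.
Qed.

Lemma div40mod5 x : x %/ 40 %% 5 = (x %% 200) %/ 40.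
Proof. lia. Qed.

Lemma case40 n : (n %% 10 == 2) || (n %% 10 == 8) -> 5 %| n ^ 10 %/ 40.
Proof.
move=> hn.
have A : all (fun i => (i %% 10 == 2) || (i %% 10 == 8) ==> (h 200 i %/ 40 == 0))
  (iota 0 200) by vm_compute.
have /(allP A (n %% 200)) : n %% 200 \in iota 0 200 by rewrite mem_iota ltn_pmod.
have -> : n %% 200 %% 10 = n %% 10 by rewrite (modn_dvdm _ (isT : 10 %| 200)).
rewrite hn /= hE -div40mod5 => /eqP H.
by rewrite /dvdn H.
Qed.

Definition L := [:: 2; 3; 4; 5; 8; 11; 12; 16; 24; 40].

Theorem theorem7 (d : nat) :
  d \in [:: 2; 3; 4; 5; 8; 11; 12; 16; 24; 40] ->
  eventually_prime_free (fun n => n ^ 10 %/ d).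
Proof.
move=> hd /=.
have A0 : all (fun d => 0 < d) L by [].
have d0 : 0 < d := allP A0 d hd.
have A40 : all (fun d => d <= 40) L by [].
have d40 : d <= 40 := allP A40 d hd.
have A : all (fun d => all (fun i => has (fun s => h d i == s ^ 2) (iota 0 6)
   || ((d == 40) && ((i %% 10 == 2) || (i %% 10 == 8)))) (iota 0 d)) L.
  by vm_compute.
have hall := allP A d hd.
exists 3 => n n3.
have n5 : 3 ^ 5 <= n ^ 5 by rewrite leq_exp2r.
have /(allP hall (n %% d)) /orP [] : n %% d \in iota 0 d by rewrite mem_iota ltn_pmod.
  move=> /hasP [s].
  rewrite mem_iota /= hE => s6 /eqP hs.
  have K := @key n d s d0 hs. apply: K.
  rewrite /=; lia.
move=> /andP [/eqP d40e]; subst d.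
have -> : n %% 40 %% 10 = n %% 10 by rewrite (modn_dvdm _ (isT : 10 %| 40)).
move=> /case40 h5 /=; apply/negP => pq.
have := (prime_nt_dvdP pq (isT : 5 != 1)).
move=> /(_ h5) h5q.
have n10 : 3 ^ 10 <= n ^ 10 by rewrite leq_exp2r.
have := divn_eq (n ^ 10) 40; have := ltn_pmod (n ^ 10) (isT : 0 < 40).
rewrite -h5q; lia.
Qed.
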